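(* Let $q\in\mathbb R$ and let $\mu$ be a compactly supported Borel probability measure on $\mathbb R^n$. Then for every $E\subseteq\operatorname{supp}\mu$, $$\mathsf b^q_\mu(E)=\sup_{F\subseteq E}\ \inf\Big\{\sup_i\Theta^q_\mu(F_i):F\subseteq\bigcup_iF_i,\ F_i\text{ bounded}\Big\}$$ and $$\mathsf B^q_\mu(E)=\inf\Big\{\sup_i\mathsf\Delta^q_\mu(E_i):E\subseteq\bigcup_iE_i,\ E_i\text{ bounded}\Big\},$$ where the unions are countable.
   Context: $B(x,r)$ is the closed ball. A centred covering of $E$ by $r$-balls is a family $(B(x_i,r))_i$ with $x_i\in E$ covering $E$; a centred packing is a family $(B(x_i,r))_i$ of pairwise disjoint closed balls with $x_i\in E$. $N^q_{\mu,r}(E)=\inf\sum_i\mu(B(x_i,r))^q$ over centred coverings, $M^q_{\mu,r}(E)=\sup\sum_i\mu(B(x_i,r))^q$ over centred packings. $\mathsf L^{q,t}_\mu(E)=\liminf_{r\to0}N^q_{\mu,r}(E)(2r)^t$, $\mathsf C^{q,t}_\mu(E)=\limsup_{r\to0}M^q_{\mu,r}(E)(2r)^t$; $\overline{\mathsf H}^{q,t}_\mu(E)=\inf\{\sum_i\mathsf L^{q,t}_\mu(E_i):E\subseteq\bigcup_iE_i,\ E_i\text{ bounded}\}$, $\mathsf H^{q,t}_\mu(E)=\sup_{F\subseteq E}\overline{\mathsf H}^{q,t}_\mu(F)$, $\mathsf P^{q,t}_\mu(E)=\inf\{\sum_i\mathsf C^{q,t}_\mu(E_i):E\subseteq\bigcup_iE_i,\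 E_i\text{ bounded}\}$. The numbers $\mathsf b^q_\mu(E),\mathsf B^q_\mu(E),\mathsf\Delta^q_\mu(E),\Theta^q_\mu(E)\in[-\infty,\infty]$ are the unique thresholds in $t$ at which $\mathsf H^{q,t}_\mu(E)$, $\mathsf P^{q,t}_\mu(E)$, $\mathsf C^{q,t}_\mu(E)$, $\mathsf L^{q,t}_\mu(E)$ respectively jump from $\infty$ (for smaller $t$) to $0$ (for larger $t$). *)

(* Defs.v *)
From HB Require Import structures.
From mathcomp Require Import all_boot all_order all_algebra.
From mathcomp Require Import all_classical all_reals all_analysis.
Set Implicit Arguments. Unset Strict Implicit. Unset Printing Implicit Defensive.
Import Order.TTheory GRing.Theory Num.Theory numFieldNormedType.Exports.
Local Open Scope classical_set_scope.
Local Open Scope ring_scope.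

Section Multifractal.
Variables (R : realType) (n : nat).

Definition Rn : Type := g_sigma_algebraType (open : set (set 'rV[R]_n)).

Definition edist (x y : 'rV[R]_n) : R :=
  Num.sqrt (\sum_(i < n) (x ord0 i - y ord0 i) ^+ 2).
Definition cball (x : Rn) (r : R) : set Rn := [set y | edist x y <= r].

Definition ebounded (A : set Rn) : Prop := exists (c : Rn) (r : R), A `<=` cball c r.

Variable mu : probability Rn R.

Definition supp : set Rn :=
  [set x | forall U : set 'rV[R]_n, open U -> U x -> (0 < mu U)%E].

(* a^q for a = mu(B) in [0,1], with the conventions 0^q = +oo (q <= 0), 0^q = 0 (q > 0) *)
Definition qpow (a : \bar R) (q : R) : \bar R :=
  match a with
  | r%:E => if 0 < r then (r `^ q)%:E else if q <= 0 then +oo%E else 0%E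
  | +oo%E => +oo%E
  | -oo%E => 0%E
  end.

(* N^q_{mu,r}(E): inf over centred coverings (given by their set of centres C) *)
Definition Ncov (q r : R) (E : set Rn) : \bar R :=
  ereal_inf [set s | exists C : set Rn, C `<=` E /\
     E `<=` \bigcup_(x in C) cball x r /\
     s = (\esum_(x in C) qpow (mu (cball x r)) q)%E].

Definition Mpack (q r : R) (E : set Rn) : \bar R :=
  ereal_sup [set s | exists C : set Rn, C `<=` E /\
     (forall x y, C x -> C y -> x <> y -> cball x r `&` cball y r = set0) /\
     s = (\esum_(x in C) qpow (mu (cball x r)) q)%E].

Definition liminf0 (f : R -> \bar R) : \bar R :=
  ereal_sup [set ereal_inf [set f r | r in [set r | 0 < r < d]] | d in [set d : R | 0 < d]].
Definition limsup0 (f : R -> \bar R) : \bar R :=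
  ereal_inf [set ereal_sup [set f r | r in [set r | 0 < r < d]] | d in [set d : R | 0 < d]].

Definition Lq (q t : R) (E : set Rn) : \bar R :=
  liminf0 (fun r => (Ncov q r E * ((2 * r) `^ t)%:E)%E).
Definition Cq (q t : R) (E : set Rn) : \bar R :=
  limsup0 (fun r => (Mpack q r E * ((2 * r) `^ t)%:E)%E).

Definition Hbar (q t : R) (E : set Rn) : \bar R :=
  ereal_inf [set (\sum_(0 <= i <oo) Lq q t (Ei i))%E |
     Ei in [set Ei : nat -> set Rn | E `<=` \bigcup_i Ei i /\ forall i, ebounded (Ei i)]].
Definition Hq (q t : R) (E : set Rn) : \bar R :=
  ereal_sup [set Hbar q t F | F in [set F | F `<=` E]].
Definition Pq (q t : R) (E : set Rn) : \bar R :=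
  ereal_inf [set (\sum_(0 <= i <oo) Cq q t (Ei i))%E |
     Ei in [set Ei : nat -> set Rn | E `<=` \bigcup_i Ei i /\ forall i, ebounded (Ei i)]].

(* threshold where t |-> f t jumps from +oo to 0 : inf {t | f t = 0} *)
Definition threshold (f : R -> \bar R) : \bar R :=
  ereal_inf [set t%:E | t in [set t : R | f t = 0%E]].

Definition b_dim (q : R) (E : set Rn) : \bar R := threshold (fun t => Hq q t E).
Definition B_dim (q : R) (E : set Rn) : \bar R := threshold (fun t => Pq q t E).
Definition Delta_dim (q : R) (E : set Rn) : \bar R := threshold (fun t => Cq q t E).
Definition Theta_dim (q : R) (E : set Rn) : \bar R := threshold (fun t => Lq q t E).

End Multifractal.

(* Main.v *)
Require Import Defs.
From HB Require Import structures.
From mathcomp Require Import all_boot all_order all_algebra.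
From mathcomp Require Import all_classical all_reals all_analysis.
From mathcomp Require Import lra ring.
Import Order.TTheory GRing.Theory Num.Theory numFieldNormedType.Exports.
Local Open Scope classical_set_scope.
Local Open Scope ring_scope.
Local Open Scope ereal_scope.
Lemma le_dense (R : realType) (x y : \bar R) :
  (forall t : R, y < t%:E -> x <= t%:E) -> x <= y.
Proof.
move=> H; case: y H => [r||] H.
- apply/lee_addgt0Pr => e e0; rewrite -EFinD; apply: H; rewrite lte_fin; lra.
- exact: leey.
- case: x H => [r'||] H //.
  + have := H (r' - 1)%R (ltNyr _); rewrite lee_fin => h; exfalso; lra.
  + by have := H 0%R (ltNyr _).
Qed.

Lemma thr_lt (R : realType) (f : R -> \bar R) (t : R) :
  (forall t, 0 <= f t) -> (forall t t', (t <= t')%R -> f t' <= f t) ->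
  threshold f < t%:E -> f t = 0.
Proof.
move=> f0 fa /ereal_inf_lt [_ [t0 /= ft0 <-]]; rewrite lte_fin => t0t.
apply/eqP; rewrite eq_le f0 andbT -ft0; apply: fa; exact: ltW.
Qed.

Lemma thr_le (R : realType) (f : R -> \bar R) (t : R) :
  f t = 0 -> threshold f <= t%:E.
Proof. by move=> ft; apply: ereal_inf_lbound; exists t. Qed.

Section Generic.
Variables (R : realType) (T : Type) (bnd : set T -> Prop) (Phi : R -> set T -> \bar R).
Hypothesis Phi_ge0 : forall t A, 0 <= Phi t A.
Hypothesis Phi_anti : forall t t' A, (t <= t')%R -> Phi t' A <= Phi t A.
Hypothesis Phi_fin : forall t t' A, Phi t A < +oo -> (t < t')%R -> Phi t' A = 0.

Let cov (E : set T) := [set Ei : nat -> set T | E `<=` \bigcup_i Ei i /\ forall i, bnd (Ei i)].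
Let P t E := ereal_inf [set (\sum_(0 <= i <oo) Phi t (Ei i)) | Ei in cov E].
Let D A := threshold (fun t => Phi t A).

Lemma P_ge0 t E : 0 <= P t E.
Proof.
apply: le_ereal_inf_tmp => _ [Ei _ <-]; apply: nneseries_ge0 => *; exact: Phi_ge0.
Qed.

Lemma P_anti t t' E : (t <= t')%R -> P t' E <= P t E.
Proof.
move=> tt; apply: le_ereal_inf_tmp => _ [Ei cE <-].
apply: le_trans (ereal_inf_lbound _) _; first by exists Ei.
apply: lee_nneseries => *; [exact: Phi_ge0|exact: Phi_anti].
Qed.

Lemma D_fin t A : Phi t A < +oo -> D A <= t%:E.
Proof.
move=> ft; apply: le_dense => t1 tt1; apply: thr_le => /=.
by rewrite lte_fin in tt1; exact: (Phi_fin _ _ _ ft tt1).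
Qed.

Lemma generic E : threshold (fun t => P t E) =
  ereal_inf [set ereal_sup (range (fun i => D (Ei i))) | Ei in cov E].
Proof.
apply/eqP; rewrite eq_le; apply/andP; split.
- apply: le_ereal_inf_tmp => _ [Ei cE <-].
  apply: le_dense => t st; apply: thr_le.
  apply/eqP; rewrite eq_le P_ge0 andbT.
  apply: le_trans (ereal_inf_lbound _) _; first by exists Ei.
  rewrite eseries0 // => i _ _.
  apply: (@thr_lt _ (fun t => Phi t (Ei i))).
  - by move=> ?; exact: Phi_ge0.
  - by move=> ? ? ?; exact: Phi_anti.
  apply: le_lt_trans st; apply: ereal_sup_ubound; by exists i.
- apply: le_ereal_inf_tmp => _ [t0 /= Pt0 <-].
  have : P t0 E < 1%:E by rewrite Pt0 lte_fin.
  move=> /ereal_inf_lt [_ [Ei cE <-]] sl.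
  apply: le_trans (ereal_inf_lbound _) _; first by exists Ei.
  apply: ge_ereal_sup => _ [i _ <-]; apply: D_fin.
  apply: le_lt_trans (lt_trans sl (ltry _)).
  have := @nneseries_lim_ge _ (fun i => Phi t0 (Ei i)) xpredT 0%N i.+1.
  move=> /(_ (fun _ _ _ => Phi_ge0 _ _)); apply: le_trans.
  rewrite big_nat_recr //=; rewrite leeDr //; apply: sume_ge0 => *; exact: Phi_ge0.
Qed.
End Generic.

Lemma thr_sup (R : realType) (I : Type) (S : set I) (h : R -> I -> \bar R) (i0 : I) :
  S i0 -> (forall t i, 0 <= h t i) -> (forall t t' i, (t <= t')%R -> h t' i <= h t i) ->
  threshold (fun t => ereal_sup [set h t F | F in S]) =
  ereal_sup [set threshold (fun t => h t F) | F in S].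
Proof.
move=> Si0 h0 ha; apply/eqP; rewrite eq_le; apply/andP; split.
- apply: le_dense => t st; apply: thr_le.
  apply/eqP; rewrite eq_le; apply/andP; split.
  + apply: ge_ereal_sup => _ [F SF <-].
    suff -> : h t F = 0 by [].
    apply: (@thr_lt _ (fun t => h t F)).
    * by move=> ?; exact: h0.
    * by move=> ? ? ?; exact: ha.
    apply: le_lt_trans st; apply: ereal_sup_ubound; by exists F.
  + apply: le_trans (h0 t i0) _; apply: ereal_sup_ubound; by exists i0.
- apply: ge_ereal_sup => _ [F SF <-].
  apply: le_ereal_inf_tmp => _ [t /= ht <-]; apply: thr_le.
  apply/eqP; rewrite eq_le h0 andbT -ht; apply: ereal_sup_ubound; by exists F.
Qed.

Lemma liminf0_ge0 (R : realType) (f : R -> \bar R) : (forall r, 0 <= f r) -> 0 <= liminf0 f.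
Proof.
move=> f0; apply: le_ereal_sup_tmp; eexists; first by exists 1%R; [rewrite /= ltr01|].
by apply: le_ereal_inf_tmp => _ [r _ <-].
Qed.

Lemma limsup0_ge0 (R : realType) (f : R -> \bar R) : (forall r, 0 <= f r) -> 0 <= limsup0 f.
Proof.
move=> f0; apply: le_ereal_inf_tmp => _ [d /= d0 <-].
apply: le_ereal_sup_tmp; exists (f (d / 2)%R); last exact: f0.
exists (d / 2)%R => //=; apply/andP; split; lra.
Qed.

Lemma liminf0_le (R : realType) (f g : R -> \bar R) :
  (forall r, (0 < r)%R -> (r < 2^-1)%R -> f r <= g r) -> liminf0 f <= liminf0 g.
Proof.
move=> fg; apply: ge_ereal_sup => _ [d /= d0 <-].
have d'0 : (0 < Num.min d 2^-1)%R by rewrite lt_min d0 /=; lra.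
apply: le_ereal_sup_tmp; eexists; first by exists (Num.min d 2^-1)%R.
apply: le_ereal_inf_tmp => _ [r /= /andP[r0 rd] <-].
move: rd; rewrite lt_min => /andP[rd r2].
apply: le_trans (fg r r0 r2).
by apply: ereal_inf_lbound; exists r => //=; rewrite r0 rd.
Qed.

Lemma limsup0_le (R : realType) (f g : R -> \bar R) :
  (forall r, (0 < r)%R -> (r < 2^-1)%R -> f r <= g r) -> limsup0 f <= limsup0 g.
Proof.
move=> fg; apply: le_ereal_inf_tmp => _ [d /= d0 <-].
have d'0 : (0 < Num.min d 2^-1)%R by rewrite lt_min d0 /=; lra.
apply: le_trans (ereal_inf_lbound _) _; first by exists (Num.min d 2^-1)%R.
apply: ge_ereal_sup => _ [r /= /andP[r0 rd] <-].
move: rd; rewrite lt_min => /andP[rd r2].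
apply: le_trans (fg r r0 r2) _.
by apply: ereal_sup_ubound; exists r => //=; rewrite r0 rd.
Qed.

Section Pow.
Variables (R : realType) (f0 : R -> \bar R).
Hypothesis f00 : forall r, 0 <= f0 r.
Let g (t : R) := fun r : R => f0 r * ((2 * r) `^ t)%:E.

Lemma g_ge0 t r : 0 <= g t r.
Proof. by rewrite /g mule_ge0 // lee_fin powR_ge0. Qed.

Lemma g_anti t t' r : (0 < r)%R -> (r < 2^-1)%R -> (t <= t')%R -> g t' r <= g t r.
Proof.
move=> r0 r2 tt; rewrite /g; apply: lee_wpmul2l => //; rewrite lee_fin.
by apply: ger_powR => //; apply/andP; split; lra.
Qed.

Lemma key t s r M e : (0 < s)%R -> (0 < r)%R -> (0 < M)%R -> (0 < e)%R ->
  (2 * r <= (e / M) `^ (s^-1))%R -> g t r <= M%:E -> g (t + s) r <= e%:E.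
Proof.
move=> s0 r0 M0 e0 rb gM; rewrite /g powRD; last first.
  by apply/implyP => _; apply/eqP; lra.
rewrite EFinM muleA.
have -> : e = (M * (e / M))%R by field; lra.
rewrite EFinM; apply: lee_pmul => //.
- exact: g_ge0.
- by rewrite lee_fin powR_ge0.
rewrite lee_fin.
have -> : (e / M = ((e / M) `^ s^-1) `^ s)%R.
  by rewrite -powRrM mulVf ?powRr1 //; [apply: divr_ge0; lra | lra].
apply: ge0_ler_powR => //; first lra.
- rewrite nnegrE; lra.
- by rewrite nnegrE powR_ge0.
Qed.

Lemma bound_pos (e M : R) : (0 < e)%R -> (0 < M)%R -> forall s : R, (0 < s)%R -> (0 < (e / M) `^ (s^-1) / 2)%R.
Proof.
move=> e0 M0 s s0; apply: divr_gt0 => //; apply: powR_gt0; exact: divr_gt0.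
Qed.

Lemma fin_real (x : \bar R) : x < +oo -> exists M : R, x < M%:E.
Proof.
case: x => [r||] // _; first by exists (r + 1)%R; rewrite lte_fin; lra.
by exists 0%R; exact: ltNyr.
Qed.

Lemma limsup0_fin t t' : limsup0 (g t) < +oo -> (t < t')%R -> limsup0 (g t') = 0.
Proof.
move=> /fin_real [M] /ereal_inf_lt [_ [d0 /= d00 <-]] hM tt.
apply/eqP; rewrite eq_le limsup0_ge0 ?andbT; last by move=> r; exact: g_ge0.
have gM r : (0 < r)%R -> (r < d0)%R -> g t r < M%:E.
  move=> r0 rd; apply: le_lt_trans hM; apply: ereal_sup_ubound; exists r => //=.
  by rewrite r0 rd.
have M0 : (0 < M)%R.
  rewrite -lte_fin; apply: le_lt_trans (gM (d0/2)%R _ _); [exact: g_ge0|lra|lra].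
apply/lee_addgt0Pr => e e0; rewrite add0e.
set s := (t' - t)%R.
have s0 : (0 < s)%R by rewrite /s; lra.
have b0 := @bound_pos e M e0 M0 s s0.
set de := (Num.min d0 ((e / M) `^ (s^-1) / 2))%R.
have de0 : (0 < de)%R by rewrite lt_min d00 b0.
apply: le_trans (ereal_inf_lbound _) _; first by exists de.
apply: ge_ereal_sup => _ [r /= /andP[r0 rd] <-].
move: rd; rewrite lt_min => /andP[rd rb].
have -> : t' = (t + s)%R by rewrite /s; ring.
apply: (key _ _ _ M _ s0 r0 M0 e0); first lra.
exact: ltW (gM r r0 rd).
Qed.

Lemma liminf0_fin t t' : liminf0 (g t) < +oo -> (t < t')%R -> liminf0 (g t') = 0.
Proof.
move=> /fin_real [M] hM tt.
have gM d : (0 < d)%R -> exists r, [/\ (0 < r)%R, (r < d)%R & g t r < M%:E].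
  move=> d0.
  have : ereal_inf [set g t r | r in [set r | (0 < r < d)%R]] < M%:E.
    apply: le_lt_trans hM; apply: ereal_sup_ubound; by exists d.
  move=> /ereal_inf_lt [_ [r /= /andP[r0 rd] <-]] h; by exists r.
have M0 : (0 < M)%R.
  have [r [r0 r1 h]] := gM 1%R ltr01.
  rewrite -lte_fin; apply: le_lt_trans h; exact: g_ge0.
apply/eqP; rewrite eq_le liminf0_ge0 ?andbT; last by move=> r; exact: g_ge0.
apply/lee_addgt0Pr => e e0; rewrite add0e.
set s := (t' - t)%R.
have s0 : (0 < s)%R by rewrite /s; lra.
have b0 := @bound_pos e M e0 M0 s s0.
apply: ge_ereal_sup => _ [d /= d0 <-].
set de := (Num.min d ((e / M) `^ (s^-1) / 2))%R.
have de0 : (0 < de)%R by rewrite lt_min d0 b0.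
have [r [r0 rd h]] := gM de de0.
move: rd; rewrite lt_min => /andP[rd rb].
apply: le_trans (ereal_inf_lbound _) _; first by exists r => //=; rewrite r0 rd.
have -> : t' = (t + s)%R by rewrite /s; ring.
apply: (key _ _ _ M _ s0 r0 M0 e0); first lra.
exact: ltW.
Qed.
End Pow.

Lemma qpow_ge0 (R : realType) (a : \bar R) (q : R) : 0 <= qpow a q.
Proof.
case: a => [r||] //=; case: ifPn => _; first by rewrite lee_fin powR_ge0.
by case: ifPn.
Qed.

Section Concrete.
Variables (R : realType) (n : nat) (mu : probability (Rn R n) R) (q : R).

Lemma Ncov_ge0 r E : 0 <= Ncov mu q r E.
Proof.
apply: le_ereal_inf_tmp => _ [C [_ [_ ->]]]; apply: esum_ge0 => *; exact: qpow_ge0.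
Qed.

Lemma Mpack_ge0 r E : 0 <= Mpack mu q r E.
Proof.
apply: le_ereal_sup_tmp; exists 0 => //; exists set0; split => //; split => //.
by rewrite esum_set0.
Qed.

Lemma Cq_ge0 t A : 0 <= Cq mu q t A.
Proof.
apply: limsup0_ge0 => r /=; apply: mule_ge0; [exact: (Mpack_ge0 r A)|by rewrite lee_fin powR_ge0].
Qed.

Lemma Lq_ge0 t A : 0 <= Lq mu q t A.
Proof.
apply: liminf0_ge0 => r; apply: mule_ge0; [exact: Ncov_ge0|by rewrite lee_fin powR_ge0].
Qed.

Lemma Cq_anti t t' A : (t <= t')%R -> Cq mu q t' A <= Cq mu q t A.
Proof.
move=> tt; apply: limsup0_le => r r0 r2.
exact: (@g_anti _ (fun r => Mpack mu q r A) (fun r => Mpack_ge0 r A) t t' r r0 r2 tt).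
Qed.

Lemma Lq_anti t t' A : (t <= t')%R -> Lq mu q t' A <= Lq mu q t A.
Proof.
move=> tt; apply: liminf0_le => r r0 r2.
exact: (@g_anti _ (fun r => Ncov mu q r A) (fun r => Ncov_ge0 r A) t t' r r0 r2 tt).
Qed.

Lemma Cq_fin t t' A : Cq mu q t A < +oo -> (t < t')%R -> Cq mu q t' A = 0.
Proof.
exact: (@limsup0_fin _ (fun r => Mpack mu q r A) (fun r => Mpack_ge0 r A)).
Qed.

Lemma Lq_fin t t' A : Lq mu q t A < +oo -> (t < t')%R -> Lq mu q t' A = 0.
Proof.
exact: (@liminf0_fin _ (fun r => Ncov mu q r A) (fun r => Ncov_ge0 r A)).
Qed.
End Concrete.

Theorem proposition2p6 (R : realType) (n : nat) (mu : probability (Rn R n) R)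
    (q : R) :
  compact (supp mu : set 'rV[R]_n) ->
  forall E : set (Rn R n), E `<=` supp mu ->
  b_dim mu q E =
    ereal_sup [set ereal_inf [set ereal_sup (range (fun i => Theta_dim mu q (Fi i))) |
        Fi in [set Fi : nat -> set (Rn R n) |
                 F `<=` \bigcup_i Fi i /\ forall i, ebounded (Fi i)]]
      | F in [set F | F `<=` E]]
  /\
  B_dim mu q E =
    ereal_inf [set ereal_sup (range (fun i => Delta_dim mu q (Ei i))) |
        Ei in [set Ei : nat -> set (Rn R n) |
                 E `<=` \bigcup_i Ei i /\ forall i, ebounded (Ei i)]].
Proof.
move=> _ E _; split; last first.
  exact: (@generic R (Rn R n) (@ebounded R n) (fun t A => Cq mu q t A)
     (@Cq_ge0 R n mu q) (@Cq_anti R n mu q) (@Cq_fin R n mu q) E).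
have hg F := (@generic R (Rn R n) (@ebounded R n) (fun t A => Lq mu q t A)
     (@Lq_ge0 R n mu q) (@Lq_anti R n mu q) (@Lq_fin R n mu q) F).
have h1 := (@thr_sup R _ [set F | F `<=` E] (fun t F => Hbar mu q t F) E (fun _ x => x)
  (fun t F => @P_ge0 R (Rn R n) (@ebounded R n) (fun t A => Lq mu q t A) (@Lq_ge0 R n mu q) t F)
  (fun t t' F tt => @P_anti R (Rn R n) (@ebounded R n) (fun t A => Lq mu q t A)
     (@Lq_ge0 R n mu q) (@Lq_anti R n mu q) t t' F tt)).
rewrite /b_dim /Hq.
rewrite h1.
congr (ereal_sup _).
apply: eq_imagel => F _ /=.
exact: (hg F).
Qed.
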